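(* Let $G=(V,E)$ and $G'=(V,E')$ be simple directed graphs on the same vertex set with the same underlying undirected graph, i.e. $\{\{u,v\} : (u,v)\in E\}=\{\{u,v\}:(u,v)\in E'\}$. Let $D:=(E'\setminus E)\cup(E\setminus E')$ and $N:=\mathrm{nbhd}(D)$. Then $$d\mathcal{F}l(G') = d\mathcal{F}l(G'[N]) \uplus \big(d\mathcal{F}l(G)\setminus d\mathcal{F}l(G[N])\big),$$ where $\uplus$ denotes a disjoint union.
   Context: A simple directed graph is a pair $G=(V,E)$ with $V$ finite and $E\subseteq (V\times V)\setminus\{(v,v):v\in V\}$; $(i,j)\in E$ is an edge from $i$ to $j$. For $W\subseteq V$, the induced subgraph $G[W]$ is $(W, E\cap (W\times W))$. A simplex of dimension $d$ in $G$ is a tuple $[v_0,\dots,v_d]$ of distinct vertices such that $(v_a,v_b)\in E$ for all $a<b$ (equivalently, a subgraph of a clique together with a total order on its vertices such that the chosen edges point from lower to higher vertices). The directed flag complex $d\mathcal{F}l(G)$ is the collection of all simplices of all dimensions $d\ge 0$ of $G$; a simplex of an induced subgraph $G[W]$ is regarded as a simplex of $G$. For an (ordered) pair $(i,j)$ of vertices joined by an edge in either direction, $\mathrm{nbhd}((i,j)) = \{i,j\}\cup\big((\mathrm{In}(i)\cup\mathrm{Out}(i))\cap(\mathrm{In}(j)\cup\mathrm{Out}(j))\big)$ where $\mathrm{In}(v)=\{u:(u,v)\in E\}$ and $\mathrm{Out}(v)=\{u:(v,u)\in E\}$ (this set is the same whether computed in $G$ or $G'$, since they have the same underlying undirected graph).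 For a set $D$ of such pairs, $\mathrm{nbhd}(D)=\bigcup_{e\in D}\mathrm{nbhd}(e)$. *)

(* Defs.v *)
From mathcomp Require Import all_boot.
Set Implicit Arguments. Unset Strict Implicit. Unset Printing Implicit Defensive.

Definition simple_digraph (V : finType) (E : rel V) : Prop :=
  forall v : V, ~~ E v v.

Definition same_underlying (V : finType) (E E' : rel V) : Prop :=
  forall u v : V, (E u v || E v u) = (E' u v || E' v u).

Definition induced_rel (V : finType) (W : {set V}) (E : rel V) : rel V :=
  fun x y => [&& E x y, x \in W & y \in W].

Definition is_simplex (V : finType) (W : {set V}) (E : rel V) (s : seq V) : bool :=
  [&& s != [::], all (fun v => v \in W) s, uniq s & pairwise E s].

Definition dFl (V : finType) (E : rel V) : pred (seq V) :=
  fun s => is_simplex [set: V] E s.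

(* Directed flag complex of the induced subgraph G[W], whose simplices are
   regarded as simplices of G (tuples of vertices of V). *)
Definition dFl_induced (V : finType) (E : rel V) (W : {set V}) : pred (seq V) :=
  fun s => is_simplex W (induced_rel W E) s.

Definition In_ (V : finType) (E : rel V) (v : V) : {set V} := [set u | E u v].
Definition Out_ (V : finType) (E : rel V) (v : V) : {set V} := [set u | E v u].

Definition nbhd_pair (V : finType) (E : rel V) (i j : V) : {set V} :=
  [set i; j] :|: ((In_ E i :|: Out_ E i) :&: (In_ E j :|: Out_ E j)).

Definition sym_diff_edges (V : finType) (E E' : rel V) : {set V * V} :=
  [set p : V * V | (E' p.1 p.2 && ~~ E p.1 p.2) || (E p.1 p.2 && ~~ E' p.1 p.2)].

Definition nbhd_set (V : finType) (E : rel V) (D : {set V * V}) : {set V} :=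
  \bigcup_(p in D) nbhd_pair E p.1 p.2.

(* Main.v *)
Require Import Defs.
From mathcomp Require Import all_boot.

Lemma pw_adj (V : eqType) (r : rel V) (s : seq V) x y :
  pairwise r s -> x \in s -> y \in s -> x != y -> r x y || r y x.
Proof.
elim: s => //= a s IH /andP [Ha Hs].
rewrite !inE => /orP [/eqP ->|xs] /orP [/eqP ->|ys]; first by rewrite eqxx.
- by move=> _; rewrite (allP Ha y ys).
- by move=> _; rewrite (allP Ha x xs) orbT.
- exact: IH.
Qed.

Lemma key (V : finType) (E F F' : rel V) (D : {set V * V}) (s : seq V) w :
  (forall u v, F u v -> E u v || E v u) ->
  (forall a b, F a b -> ~~ F' a b -> (a, b) \in D) ->
  pairwise F s -> w \in s -> w \notin nbhd_set E D -> pairwise F' s.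
Proof.
move=> HFE HD Hs ws wN; have Hs0 := Hs.
apply: (@sub_in_pairwise _ (mem s)) Hs; last by apply/allP.
move=> a b as_ bs Fab; apply/negPn/negP => nF.
move: (HD _ _ Fab nF) => Dab.
have sub : nbhd_pair E a b \subset nbhd_set E D.
  by apply: (bigcup_max (a, b)).
have wa : w != a.
  apply/eqP => eq; move/negP: wN; apply; apply: (subsetP sub).
  by rewrite /nbhd_pair !inE eq eqxx.
have wb : w != b.
  apply/eqP => eq; move/negP: wN; apply; apply: (subsetP sub).
  by rewrite /nbhd_pair !inE eq eqxx orbT.
have Ha := @pw_adj _ _ _ _ _ Hs0 ws as_ wa.
have Hb := @pw_adj _ _ _ _ _ Hs0 ws bs wb.
move/negP: wN; apply; apply: (subsetP sub).
rewrite /nbhd_pair /In_ /Out_ !inE.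
apply/orP; right; apply/andP; split.
- by case/orP: Ha => /HFE /orP [] ->; rewrite ?orbT.
- by case/orP: Hb => /HFE /orP [] ->; rewrite ?orbT.
Qed.

Theorem lemma2p9 (V : finType) (E E' : rel V) :
  simple_digraph E -> simple_digraph E' -> same_underlying E E' ->
  let N := nbhd_set E (sym_diff_edges E E') in
  (* dFl(G') = dFl(G'[N]) ∪ (dFl(G) \ dFl(G[N])) ... *)
  (forall s : seq V,
      dFl E' s <-> (dFl_induced E' N s \/ (dFl E s /\ ~ dFl_induced E N s))) /\
  (* ... and the union is disjoint. *)
  (forall s : seq V,
      ~ (dFl_induced E' N s /\ (dFl E s /\ ~ dFl_induced E N s))).
Proof.
move=> _ _ Hsame N.
have indP : forall (F : rel V) s, all (fun v => v \in N) s -> pairwise F s ->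
    pairwise (induced_rel N F) s.
  move=> F s Hall; apply: (@sub_in_pairwise _ (fun v => v \in N)) => //.
  by move=> a b aN bN Fab; rewrite /induced_rel Fab aN bN.
have indW : forall (F : rel V) s, pairwise (induced_rel N F) s -> pairwise F s.
  by move=> F s; apply: sub_pairwise => a b /and3P [].
split; last first.
  move=> s [H1 [H2 H3]]; apply: H3.
  move: H1 H2; rewrite /dFl_induced /dFl /is_simplex.
  case/and4P => ne A U _ /and4P [_ _ _ P].
  by apply/and4P; split => //; apply: indP.
move=> s; split.
- rewrite /dFl /dFl_induced /is_simplex => /and4P [ne _ U P].
  have [A|nA] := boolP (all (fun v => v \in N) s).
    by left; apply/and4P; split => //; apply: indP.
  right.
  have [w ws wN] : exists2 w, w \in s & w \notin N.
    by move/allPn: nA => [w ws wN]; exists w.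
  have PE : pairwise E s.
    apply: (@key V E E' E (sym_diff_edges E E') s w) => //.
    + by move=> u v H; rewrite Hsame H.
    + by move=> a b Fab nF; rewrite /sym_diff_edges inE /= Fab nF.
  split; first by apply/and4P; split => //; apply/allP => x; rewrite inE.
  by case/and4P.
- rewrite /dFl /dFl_induced /is_simplex.
  case=> [/and4P [ne _ U P]|[/and4P [ne _ U P] nI]].
    by apply/and4P; split => //; [apply/allP => x; rewrite inE | apply: indW].
  have nA : ~~ all (fun v => v \in N) s.
    by apply/negP => A; apply: nI; apply/and4P; split => //; apply: indP.
  have [w ws wN] : exists2 w, w \in s & w \notin N.
    by move/allPn: nA => [w ws wN]; exists w.
  have PE : pairwise E' s.
    apply: (@key V E E E' (sym_diff_edges E E') s w) => //.
    + by move=> u v ->.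
    + by move=> a b Fab nF; rewrite /sym_diff_edges inE /= Fab nF orbT.
  by apply/and4P; split => //; apply/allP => x; rewrite inE.
Qed.
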